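(* $V^{\otimes3}=[\omega_0,V]\oplus(V\otimes Q)$.
   Context: $\mathbb{K}$ is a field of characteristic zero and $V$ a symplectic $\mathbb{K}$-vector space of dimension $2g$ with symplectic basis $a_1,\ldots,a_g,b_1,\ldots,b_g$; $\omega_0=\sum_{i=1}^g(a_i\otimes b_i-b_i\otimes a_i)\in V^{\otimes2}$. $C\colon V^{\otimes2}\to\mathbb{K}$ is the pairing given by the symplectic form, $C(a_i\otimes b_j)=\delta_{ij}$, $C(b_i\otimes a_j)=-\delta_{ij}$, $C(a_i\otimes a_j)=C(b_i\otimes b_j)=0$, and $Q=\ker C$. $[\omega_0,V]=\{\omega_0 v-v\omega_0: v\in V\}\subset V^{\otimes3}$ (products in the tensor algebra). *)

(* Defs.v *)
(* Coordinate model of the symplectic space V = K^(2g)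
   with symplectic basis a_i = e_(lshift g i), b_i = e_(rshift g i). *)
From mathcomp Require Import all_boot all_algebra.
Set Implicit Arguments. Unset Strict Implicit. Unset Printing Implicit Defensive.
Import GRing.Theory.
Local Open Scope ring_scope.

Section Tensors.
Variables (K : fieldType) (g : nat).
Notation n := (g + g)%N.

Definition Vsp := {ffun 'I_n -> K}.
Definition V2 := {ffun 'I_n * 'I_n -> K}.
Definition V3 := {ffun 'I_n * 'I_n * 'I_n -> K}.

Definition aidx (i : 'I_g) : 'I_n := lshift g i.
Definition bidx (i : 'I_g) : 'I_n := rshift g i.
Definition evec (x : 'I_n) : Vsp := [ffun y => (y == x)%:R].

Definition tens11 (v w : Vsp) : V2 := [ffun p => v p.1 * w p.2].
Definition tens12 (v : Vsp) (w : V2) : V3 :=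
  [ffun t => v t.1.1 * w (t.1.2, t.2)].
Definition tens21 (w : V2) (v : Vsp) : V3 :=
  [ffun t => w (t.1.1, t.1.2) * v t.2].

Definition omega0 : V2 :=
  \sum_(i < g) (tens11 (evec (aidx i)) (evec (bidx i))
               - tens11 (evec (bidx i)) (evec (aidx i))).

(* the contraction C : V^{(x)2} -> K, linear extension of
   C(a_i b_j) = delta_ij, C(b_i a_j) = - delta_ij, C(a a) = C(b b) = 0 *)
Definition Cpair (w : V2) : K :=
  \sum_(i < g) (w (aidx i, bidx i) - w (bidx i, aidx i)).

Definition inQ (w : V2) : Prop := Cpair w = 0.

Definition in_bracket (t : V3) : Prop :=
  exists v : Vsp, t = tens21 omega0 v - tens12 v omega0.

Definition in_VQ (t : V3) : Prop :=
  exists s : seq (Vsp * V2),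
    (forall p, p \in s -> inQ p.2) /\ t = \sum_(p <- s) tens12 p.1 p.2.

End Tensors.

(* Main.v *)
Require Import Defs.
From mathcomp Require Import all_boot all_algebra.
From mathcomp Require Import ring.
Import GRing.Theory.
Local Open Scope ring_scope.

Section Aux.
Variables (K : fieldType) (g : nat).

Lemma eqAA (i j : 'I_g) : (aidx i == aidx j) = (i == j).
Proof. by apply/eqP/eqP => [/(congr1 val)/= /val_inj|->]. Qed.
Lemma eqBB (i j : 'I_g) : (bidx i == bidx j) = (i == j).
Proof. by apply/eqP/eqP => [/(congr1 val)/= /addnI /val_inj|->]. Qed.
Lemma eqAB (i j : 'I_g) : (aidx i == bidx j) = false.
Proof. apply/eqP => /(congr1 val) /= h; have := ltn_ord i; by rewrite h ltnNge leq_addr. Qed.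
Lemma eqBA (i j : 'I_g) : (bidx i == aidx j) = false.
Proof. by rewrite eq_sym eqAB. Qed.

Lemma sum_delta (i : 'I_g) (F : 'I_g -> K) :
  \sum_(j < g) (i == j)%:R * F j = F i.
Proof.
rewrite (bigD1 i) //= eqxx mul1r big1 ?addr0 // => j /negbTE.
by rewrite eq_sym => ->; rewrite mul0r.
Qed.

Lemma omega0E x y : omega0 K g (x, y) =
  \sum_(i < g) ((x == aidx i)%:R * (y == bidx i)%:R
              - (x == bidx i)%:R * (y == aidx i)%:R).
Proof. by rewrite /omega0 sum_ffunE; apply: eq_bigr => i _; rewrite !ffunE. Qed.

Lemma omAB k l : omega0 K g (aidx k, bidx l) = (k == l)%:R.
Proof.
rewrite omega0E; under eq_bigr do rewrite !eqAA !eqBB eqAB eqBA mul0r subr0.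
by rewrite (eq_bigr (fun i => (k == i)%:R * (l == i)%:R)) // sum_delta eq_sym.
Qed.
Lemma omBA k l : omega0 K g (bidx k, aidx l) = - (k == l)%:R.
Proof.
rewrite omega0E; under eq_bigr do rewrite !eqAA !eqBB eqAB eqBA mul0r sub0r.
by rewrite sumrN sum_delta eq_sym.
Qed.
Lemma omAA k l : omega0 K g (aidx k, aidx l) = 0.
Proof.
rewrite omega0E big1 // => i _; by rewrite !eqAB ?mulr0 ?mul0r subrr.
Qed.
Lemma omBB k l : omega0 K g (bidx k, bidx l) = 0.
Proof.
rewrite omega0E big1 // => i _; by rewrite !eqBA ?mulr0 ?mul0r subrr.
Qed.

Lemma Cpair_omega0 : Cpair (omega0 K g) = (g + g)%:R.
Proof.
rewrite /Cpair (eq_bigr (fun _ => 1 + 1)); last first.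
  by move=> i _; rewrite omAB omBA eqxx opprK.
by rewrite big_split /= sumr_const card_ord natrD.
Qed.

Definition C23 (t : V3 K g) x :=
  \sum_(i < g) (t (x, aidx i, bidx i) - t (x, bidx i, aidx i)).

Lemma C23B t1 t2 x : C23 (t1 - t2) x = C23 t1 x - C23 t2 x.
Proof. by rewrite /C23 -sumrB; apply: eq_bigr => i _; rewrite !ffunE; ring. Qed.

Lemma C23_12 v w x : C23 (tens12 v w) x = v x * Cpair w.
Proof. by rewrite /C23 /Cpair mulr_sumr; apply: eq_bigr => i _; rewrite !ffunE /= mulrBr. Qed.

Lemma splitAB (x : 'I_(g + g)) : (exists k, x = aidx k) \/ (exists k, x = bidx k).
Proof.
have [k hk|k hk] := splitP x; [left|right]; exists k; apply/val_inj; exact: hk.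
Qed.

Lemma C23_21 v x : C23 (tens21 (omega0 K g) v) x = - v x.
Proof.
rewrite /C23; case: (splitAB x) => -[k ->].
  under eq_bigr do rewrite !ffunE /= omAA omAB mul0r sub0r.
  by rewrite sumrN sum_delta.
under eq_bigr do rewrite !ffunE /= omBB omBA mul0r subr0 mulNr.
by rewrite sumrN sum_delta.
Qed.

Lemma C23_br v x :
  C23 (tens21 (omega0 K g) v - tens12 v (omega0 K g)) x = - ((1 + (g+g)%:R) * v x).
Proof. rewrite C23B C23_21 C23_12 Cpair_omega0; ring. Qed.

Lemma C23D t1 t2 x : C23 (t1 + t2) x = C23 t1 x + C23 t2 x.
Proof. by rewrite /C23 -big_split; apply: eq_bigr => i _; rewrite !ffunE /=; ring. Qed.

Lemma C23_0 x : C23 0 x = 0.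
Proof. by rewrite /C23 big1 // => i _; rewrite !ffunE subrr. Qed.

Lemma VQ_C23 t : in_VQ t -> forall x, C23 t x = 0.
Proof.
case=> s [hs ->] x; elim: s hs => [|p s IH] hs; first by rewrite big_nil C23_0.
rewrite big_cons C23D C23_12 IH; last by move=> q hq; apply: hs; rewrite inE hq orbT.
by move: (hs p (mem_head _ _)); rewrite /inQ => ->; rewrite mulr0 addr0.
Qed.

Lemma C23_VQ t : (forall x, C23 t x = 0) -> in_VQ t.
Proof.
move=> h; exists [seq (evec K x, [ffun p : 'I_(g+g) * 'I_(g+g) => t (x, p.1, p.2)]) | x <- enum 'I_(g+g)].
split.
  move=> p /mapP [x _ ->] /=; rewrite /inQ -(h x) /Cpair /C23.
  by apply: eq_bigr => i _; rewrite !ffunE.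
rewrite big_map big_enum /=; apply/ffunP => -[[x y] z].
rewrite sum_ffunE (bigD1 x) //= big1 ?addr0; first by rewrite !ffunE /= eqxx mul1r.
by move=> j /negbTE hj; rewrite !ffunE /= eq_sym hj mul0r.
Qed.

End Aux.

Theorem lemma5p1 (K : fieldType) (g : nat) (charK : [pchar K] =i pred0) :
  (forall t : V3 K g, exists w u : V3 K g,
      in_bracket w /\ in_VQ u /\ t = w + u) /\
  (forall t : V3 K g, in_bracket t -> in_VQ t -> t = 0).
Proof.
set c : K := 1 + (g + g)%:R.
have hc : c != 0.
  have -> : c = (1 + (g+g))%:R by rewrite natrD.
  by move/pcharf0P: charK => ->.
split.
  move=> t; set v : Vsp K g := [ffun x => - (c^-1 * C23 K g t x)].
  set w := tens21 (omega0 K g) v - tens12 v (omega0 K g).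
  exists w, (t - w); split; first by exists v.
  split; last by rewrite addrC subrK.
  apply: C23_VQ => x; rewrite C23B C23_br ffunE mulrN mulrA mulfV // mul1r.
  by rewrite opprK subrr.
move=> t [v ->] /VQ_C23 h.
have v0 : v = 0.
  apply/ffunP => x; rewrite ffunE; move: (h x); rewrite C23_br => /eqP.
  by rewrite oppr_eq0 mulf_eq0 (negbTE hc) => /eqP.
by rewrite v0; apply/ffunP => x; rewrite !ffunE /= mulr0 mul0r subrr.
Qed.
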